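(* Let $\Gamma$ be a finitely generated group acting by homeomorphisms on a compact metrisable space $Y$. Then there exists a metric $d$ on $Y$ inducing its topology such that $\Gamma$ acts on $(Y,d)$ by Lipschitz homeomorphisms. Moreover, $d$ can be chosen so that $\dim_{AN}(Y,d)=\dim Y$.
   Context: $\dim Y$ is the Lebesgue covering dimension. The Assouad–Nagata dimension $\dim_{AN}(Y,d)$ is the least $k$ such that there is $C<\infty$ with the property that for every $R>0$ there is a cover $Y=U_0\cup\dots\cup U_k$ in which every $R$-component of every $U_j$ has diameter at most $CR$; an $R$-component of $U$ is a class of the equivalence relation on $U$ generated by identifying points at distance $<R$. *)

(* Defs.v *)
From HB Require Import structures.
From mathcomp Require Import all_boot all_order all_algebra.
From mathcomp Require Import all_classical all_reals topology.
From Stdlib Require Import Relations.Relation_Operators.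
Set Implicit Arguments. Unset Strict Implicit. Unset Printing Implicit Defensive.
Import Order.TTheory GRing.Theory Num.Theory.
Local Open Scope classical_set_scope.
Local Open Scope ring_scope.

Definition is_group (G : Type) (mul : G -> G -> G) (one : G) (inv : G -> G) : Prop :=
  [/\ forall a b c, mul a (mul b c) = mul (mul a b) c,
      forall a, mul one a = a,
      forall a, mul a one = a,
      forall a, mul (inv a) a = one &
      forall a, mul a (inv a) = one].

Inductive generated (G : Type) (mul : G -> G -> G) (one : G) (inv : G -> G)
    (S : set G) : G -> Prop :=
  | gen_base s : S s -> generated mul one inv S s
  | gen_one : generated mul one inv S one
  | gen_inv a : generated mul one inv S a -> generated mul one inv S (inv a)
  | gen_mul a b : generated mul one inv S a -> generated mul one inv S b ->
      generated mul one inv S (mul a b).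

Definition finitely_generated (G : Type) (mul : G -> G -> G) (one : G)
    (inv : G -> G) : Prop :=
  exists S : set G, finite_set S /\ forall g, generated mul one inv S g.

Definition is_action (G Y : Type) (mul : G -> G -> G) (one : G)
    (act : G -> Y -> Y) : Prop :=
  (forall y, act one y = y) /\
  (forall g h y, act (mul g h) y = act g (act h y)).

Definition is_metric (R : realType) (Y : Type) (d : Y -> Y -> R) : Prop :=
  [/\ forall x y, 0 <= d x y,
      forall x y, d x y = 0 <-> x = y,
      forall x y, d x y = d y x &
      forall x y z, d x z <= d x y + d y z].

Definition dball (R : realType) (Y : Type) (d : Y -> Y -> R) (x : Y) (r : R) :
  set Y := [set y | d x y < r].

Definition induces_topology (R : realType) (Y : topologicalType)
    (d : Y -> Y -> R) : Prop :=
  forall A : set Y, open A <->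
    (forall x, A x -> exists2 r : R, 0 < r & dball d x r `<=` A).

Definition metrisable (R : realType) (Y : topologicalType) : Prop :=
  exists d : Y -> Y -> R, is_metric d /\ induces_topology d.

Definition lipschitz (R : realType) (Y : Type) (d : Y -> Y -> R) (f : Y -> Y) :
  Prop := exists L : R, forall x y, d (f x) (f y) <= L * d x y.

Definition covers (Y : Type) (I : Type) (U : I -> set Y) : Prop :=
  forall y, exists i, U i y.

Definition covdim_le (Y : topologicalType) (n : nat) : Prop :=
  forall (k : nat) (U : 'I_k -> set Y),
    (forall i, open (U i)) -> covers U ->
    exists (m : nat) (V : 'I_m -> set Y),
      [/\ forall j, open (V j),
          covers V,
          forall j, exists i, V j `<=` U i &
          forall y, (#|[set j | `[< V j y >] ]| <= n.+1)%N].

Definition r_close (R : realType) (Y : Type) (d : Y -> Y -> R) (r : R)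
    (U : set Y) : Y -> Y -> Prop :=
  fun x y => [/\ U x, U y & d x y < r].

Definition r_component (R : realType) (Y : Type) (d : Y -> Y -> R) (r : R)
    (U : set Y) (x : Y) : set Y :=
  [set y | U x /\ U y /\ clos_refl_sym_trans Y (r_close d r U) x y].

Definition ANdim_le (R : realType) (Y : Type) (d : Y -> Y -> R) (n : nat) :
  Prop :=
  exists C : R, forall r : R, 0 < r ->
    exists U : 'I_n.+1 -> set Y,
      covers U /\
      forall j x y z, r_component d r (U j) x y -> r_component d r (U j) x z ->
        d y z <= C * r.

(* Main.v *)
From HB Require Import structures.
Require Import Defs.
From mathcomp Require Import all_boot all_order all_algebra.
From mathcomp Require Import all_classical all_reals topology.
From mathcomp Require Import finmap.
From mathcomp Require Import ring lra.
From Stdlib Require Import Relations.Relation_Operators.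
Set Implicit Arguments. Unset Strict Implicit. Unset Printing Implicit Defensive.
Import Order.TTheory GRing.Theory Num.Theory.
Local Open Scope classical_set_scope.
Local Open Scope ring_scope.

Section PointedCopy.
Variables (Y : topologicalType) (y0 : Y).
Definition pY : Type := Y.
HB.instance Definition _ := Topological.on pY.
HB.instance Definition _ := isPointed.Build pY y0.
Lemma pY_cover : compact [set: Y] -> cover_compact [set: pY].
Proof. move=> c; rewrite -compact_cover; exact: c. Qed.
End PointedCopy.

Lemma fin_subcover (Y : topologicalType) (I : choiceType) (f : I -> set Y) :
  compact [set: Y] -> (forall i, open (f i)) -> (forall y, exists i, f i y) ->
  exists (p : nat) (h : 'I_p -> I), forall y, exists a, f (h a) y.
Proof.
move=> cpt fo fc.
have [Yne|Ye] := pselect (exists y : Y, True); last first.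
  exists 0%N, (fun a : 'I_0 => False_rect I (notF (ltn_ord a))).
  by move=> y; exfalso; apply: Ye; exists y.
case: Yne => y0 _.
have {}cpt := pY_cover y0 cpt.
have [|D' _ HD] := cpt I setT f (fun i _ => fo i).
  by move=> y _; have [i fi] := fc y; exists i.
case E: (D' : seq I) => [|x0 s].
  exists 0%N, (fun a : 'I_0 => False_rect I (notF (ltn_ord a))).
  move=> y; have [i Di fiy] := HD y Logic.I.
  have : i \in enum_fset D' := Di. by rewrite E.
exists (size D'), (fun a => nth x0 D' a) => y.
have [i Di fiy] := HD y Logic.I.
have Hi : (index i D' < size D')%N by rewrite index_mem.
by exists (Ordinal Hi); rewrite /= nth_index.
Qed.

Section E.
Variable R : realType.
Definition e (i : nat) : R := (2^-1) ^+ i.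
Lemma e_gt0 i : 0 < e i.
Proof. by rewrite /e exprn_gt0 // invr_gt0. Qed.
Lemma e_le1 i : e i <= 1.
Proof. by rewrite /e exprn_ile1 // ?invr_ge0 ?invf_le1 ?ler1n //. Qed.
Lemma eS i : e i.+1 = e i / 2.
Proof. by rewrite /e exprSr. Qed.
Lemma e_add i j : e (i + j) = e i * e j.
Proof. by rewrite /e exprD. Qed.
Lemma e_mono i j : (i <= j)%N -> e j <= e i.
Proof.
move=> /subnKC <-; rewrite e_add ler_piMr ?(ltW (e_gt0 _)) ?e_le1 //.
Qed.
Lemma e_small (d : R) : 0 < d -> exists K, e K < d.
Proof.
move=> d0; have hd : 0 <= d^-1 by rewrite invr_ge0 ltW.
have := archi_boundP hd.
set K := Num.bound _ => hK; exists K.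
have h1 : forall k, (k%:R : R) <= 2 ^+ k.
  elim=> [|k ih]; first by rewrite expr0 ler01.
  rewrite exprS -natr1 mulr_natl mulr2n lerD // exprn_ege1 // ler1n //.
have h2 : d^-1 < 2 ^+ K by apply: lt_le_trans hK (h1 K).
rewrite /e exprVn -(invrK d) ltf_pV2 ?posrE ?invr_gt0 // exprn_gt0 //.
Qed.
End E.

Definition pm (R : realType) (Y : Type) (rho : Y -> Y -> R) :=
  [/\ forall x y, 0 <= rho x y, forall x, rho x x = 0,
      forall x y, rho x y = rho y x & forall x y z, rho x z <= rho x y + rho y z].

Section Metric.
Variables (R : realType) (Y : topologicalType) (d0 : Y -> Y -> R).
Hypotheses (hm0 : is_metric d0) (ht0 : induces_topology d0).
Variables (L : finType) (f : L -> Y -> Y).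
Hypothesis fcont : forall a, continuous (f a).
Definition aw (w : seq L) (y : Y) := foldr (fun a y => f a y) y w.
Variable rho : nat -> Y -> Y -> R.
Hypotheses (hrho : forall i, pm (rho i)) (hb : forall i x y, rho i x y <= e R i)
  (hlip : forall i, exists c, 0 < c /\ forall x y z, `|rho i x z - rho i y z| <= c * d0 x y)
  (h0 : forall x y, Num.min (d0 x y) 1 <= rho 0 x y).

Definition term x y i w := e R (size w) * rho i (aw w x) (aw w y).
Definition terms x y := [set v | exists i w, v = term x y i w].
Definition D x y := sup (terms x y).

Lemma term_ge0 x y i w : 0 <= term x y i w.
Proof. by rewrite /term mulr_ge0 ?(ltW (e_gt0 _ _)) //; case: (hrho i). Qed.

Lemma term_le1 x y i w : term x y i w <= 1.
Proof.
rewrite /term -[1]mul1r ler_pM ?(ltW (e_gt0 _ _)) ?e_le1 //; first by case: (hrho i).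
exact: le_trans (hb _ _ _) (e_le1 _ _).
Qed.

Lemma terms_sup x y : has_sup (terms x y).
Proof.
split; first by exists (term x y 0 [::]), 0%N, [::].
by exists 1 => _ [i [w ->]]; exact: term_le1.
Qed.

Lemma D_ge_term x y i w : term x y i w <= D x y.
Proof. by apply: sup_upper_bound; [exact: terms_sup | exists i, w]. Qed.

Lemma D_le x y b : (forall i w, term x y i w <= b) -> D x y <= b.
Proof.
move=> H; apply: ge_sup; first by exists (term x y 0 [::]), 0%N, [::].
by move=> _ [i [w ->]].
Qed.

Lemma D_ge0 x y : 0 <= D x y.
Proof. exact: le_trans (term_ge0 x y 0 [::]) (D_ge_term _ _ _ _). Qed.

Lemma D_le1 x y : D x y <= 1.
Proof. by apply: D_le => i w; exact: term_le1. Qed.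

Lemma D_min x y : Num.min (d0 x y) 1 <= D x y.
Proof.
apply: le_trans (D_ge_term x y 0 [::]).
by rewrite /term /= /e expr0 mul1r h0.
Qed.

Lemma D_xx x : D x x = 0.
Proof.
apply/eqP; rewrite eq_le D_ge0 andbT; apply: D_le => i w.
by rewrite /term; case: (hrho i) => _ -> _ _; rewrite mulr0.
Qed.

Lemma D_sym x y : D x y = D y x.
Proof.
suff H : forall x y, D x y <= D y x by apply/eqP; rewrite eq_le !H.
move=> a b; apply: D_le => i w; apply: le_trans (D_ge_term b a i w).
by rewrite /term; case: (hrho i) => _ _ -> _.
Qed.

Lemma D_tri x y z : D x z <= D x y + D y z.
Proof.
apply: D_le => i w; rewrite /term.
apply: le_trans (lerD (D_ge_term x y i w) (D_ge_term y z i w)).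
rewrite /term -mulrDr ler_wpM2l ?(ltW (e_gt0 _ _)) //.
by case: (hrho i) => _ _ _ ->.
Qed.

Lemma D_metric : is_metric D.
Proof.
split; [exact: D_ge0| |exact: D_sym|exact: D_tri].
move=> x y; split; last by move=> ->; exact: D_xx.
move=> Dxy; have := D_min x y; rewrite Dxy.
case: hm0 => hpos hsep _ _.
rewrite ge_min => /orP[h|]; last by rewrite ler10.
by apply/hsep/eqP; rewrite eq_le h hpos.
Qed.


Lemma D_tail x y K b : 0 <= b ->
  (forall i w, (i < K)%N -> (size w < K)%N -> rho i (aw w x) (aw w y) <= b) ->
  D x y <= Num.max (e R K) b.
Proof.
move=> b0 H; apply: D_le => i w; rewrite /term.
have r0 : 0 <= rho i (aw w x) (aw w y) by case: (hrho i).
have eK0 := e_gt0 R K.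
case: (ltnP i K) => hi; last first.
  rewrite le_max; apply/orP; left; rewrite -[e R K]mul1r.
  apply: ler_pM => //; first exact: ltW (e_gt0 _ _); first exact: e_le1.
  exact: le_trans (hb _ _ _) (e_mono _ hi).
case: (ltnP (size w) K) => hw; last first.
  rewrite le_max; apply/orP; left; rewrite -[e R K]mulr1.
  apply: ler_pM => //; first exact: ltW (e_gt0 _ _); first exact: e_mono.
  exact: le_trans (hb _ _ _) (e_le1 _ _).
rewrite le_max; apply/orP; right; rewrite -[b]mul1r.
by apply: ler_pM => //; [exact: ltW (e_gt0 _ _)|exact: e_le1|exact: H].
Qed.

Lemma open_local (A : set Y) :
  (forall y, A y -> exists B, [/\ open B, B y & B `<=` A]) -> open A.
Proof.
move=> H; rewrite openE => y /H [B [oB By sBA]].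
by apply: filterS sBA _; apply: open_nbhs_nbhs.
Qed.

Lemma open_fin_forall (T : finType) (P : T -> set Y) :
  (forall t, open (P t)) -> open [set z | forall t, P t z].
Proof.
move=> HP.
have H : forall s : seq T, open [set z | forall t, t \in s -> P t z].
  elim=> [|a s ih].
    by rewrite (_ : [set z | _] = setT); [exact: openT | apply/seteqP; split].
  rewrite (_ : [set z | _] = P a `&` [set z | forall t, t \in s -> P t z]).
    exact: openI.
  apply/seteqP; split=> z /=.
    by move=> h; split=> [|t ts]; apply: h; rewrite inE ?eqxx ?ts ?orbT.
  by move=> [h1 h2] t; rewrite inE => /orP[/eqP->|/h2].
rewrite (_ : [set z | _] = [set z | forall t, t \in enum T -> P t z]) //.
by apply/seteqP; split=> z /= h t; [move=> _|]; apply: h; rewrite ?mem_enum.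
Qed.

Lemma open_aw w (A : set Y) : open A -> open (aw w @^-1` A).
Proof.
elim: w A => [|a w ih] A oA //=.
rewrite (_ : _ @^-1` _ = aw w @^-1` (f a @^-1` A)) //.
by apply: ih; exact: (proj1 (continuousP (f a)) (@fcont a) _ oA).
Qed.

Lemma open_rho_lt i p (d : R) : open [set u | rho i p u < d].
Proof.
have [c [c0 hc]] := hlip i.
case: (ht0 [set u | rho i p u < d]) => _; apply=> u /= hu.
exists ((d - rho i p u) / c); first by rewrite divr_gt0 // subr_gt0.
move=> v /=; rewrite /dball /= => huv.
case: (hrho i) => _ _ hs _.
have := hc v u p; rewrite (hs v p) (hs u p) => h.
have h2 : c * d0 v u < d - rho i p u.
  by case: hm0 => _ _ -> _; rewrite mulrC -ltr_pdivlMr.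
have := ler_norm (rho i p v - rho i p u).
lra.
Qed.

Lemma open_near y K (d : R) :
  open [set z | forall i w, (i < K)%N -> (size w < K)%N ->
    rho i (aw w y) (aw w z) < d].
Proof.
rewrite (_ : [set z | _] = [set z | forall i : 'I_K, forall l : 'I_K,
    forall t : l.-tuple L, rho i (aw t y) (aw t z) < d]).
  apply: open_fin_forall => i; apply: open_fin_forall => l.
  apply: open_fin_forall => t.
  exact: (open_aw t (open_rho_lt i (aw t y) d)).
apply/seteqP; split=> z /= h.
  by move=> i l t; apply: h => //; rewrite size_tuple.
by move=> i w hi hw; exact: (h (Ordinal hi) (Ordinal hw) (in_tuple w)).
Qed.

Lemma ball_open x r : open (dball D x r).
Proof.
apply: open_local => y; rewrite /dball /= => hy.
have hd : 0 < (r - D x y) / 2 by rewrite divr_gt0 // subr_gt0.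
have [K hK] := e_small hd.
exists [set z | forall i w, (i < K)%N -> (size w < K)%N ->
    rho i (aw w y) (aw w z) < (r - D x y) / 2]; split.
- exact: open_near.
- by move=> i w _ _; case: (hrho i) => _ -> _ _.
- move=> z /= hz.
  have := @D_tail y z K _ (ltW hd) (fun i w hi hw => ltW (hz i w hi hw)).
  have -> : Num.max (e R K) ((r - D x y) / 2) = (r - D x y) / 2.
    by apply/max_idPr; exact: ltW.
  have := D_tri x y z.
  lra.
Qed.

Lemma D_topology : induces_topology D.
Proof.
move=> A; split.
- move=> /(ht0 A) H x Ax; have [r r0 hr] := H x Ax.
  exists (Num.min r 1); first by rewrite lt_min r0 ltr01.
  move=> z; rewrite /dball /= => hz; apply: hr; rewrite /dball /=.
  have := le_lt_trans (D_min x z) hz.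
  case: (ltP (d0 x z) 1) => h.
    by rewrite lt_min => /andP[].
  by rewrite lt_min ltxx andbF.
- move=> H; apply: open_local => x Ax; have [r r0 hr] := H x Ax.
  by exists (dball D x r); split=> //; [exact: ball_open | rewrite /dball /= D_xx].
Qed.

Lemma D_lip1 a x y : D (f a x) (f a y) <= 2 * D x y.
Proof.
apply: D_le => i w.
have -> : term (f a x) (f a y) i w = 2 * term x y i (rcons w a).
  rewrite /term /aw !foldr_rcons size_rcons eS mulrA.
  by rewrite [2 * _]mulrC mulfVK // pnatr_eq0.
by rewrite ler_wpM2l // D_ge_term.
Qed.

Lemma D_lipw w x y : D (aw w x) (aw w y) <= 2 ^+ size w * D x y.
Proof.
elim: w => [|a w ih] /=; first by rewrite expr0 mul1r.
apply: le_trans (D_lip1 _ _ _) _.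
by rewrite exprS -mulrA ler_wpM2l.
Qed.

End Metric.

Section Words.
Variables (G Y : Type) (mul : G -> G -> G) (one : G) (inv : G -> G) (act : G -> Y -> Y).
Hypotheses (hg : is_group mul one inv) (ha : is_action mul one act).

Lemma act_invK g y : act (inv g) (act g y) = y.
Proof.
case: ha => h1 h2; case: hg => _ _ _ hl _.
by rewrite -h2 hl h1.
Qed.

Lemma act_Kinv g y : act g (act (inv g) y) = y.
Proof.
case: ha => h1 h2; case: hg => _ _ _ _ hr.
by rewrite -h2 hr h1.
Qed.

Variables (k : nat) (gen : 'I_k -> G).
Definition glet (a : ('I_k + 'I_k)%type) :=
  match a with inl i => gen i | inr i => inv (gen i) end.
Definition gaw (w : seq ('I_k + 'I_k)) (y : Y) :=
  foldr (fun a y => act (glet a) y) y w.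

Lemma words_gen (S : set G) : (forall s, S s -> exists i, gen i = s) ->
  forall g, generated mul one inv S g ->
  exists w w', (forall y, act g y = gaw w y) /\ (forall y, act (inv g) y = gaw w' y).
Proof.
move=> hS g; elim=> {g}.
- move=> s /hS [i <-]; exists [:: inl i], [:: inr i]; by split.
- exists [::], [::]; case: ha => h1 _; split=> y /=; first by rewrite h1.
  by rewrite -{1}(h1 y) act_invK.
- move=> a _ [w [w' [h h']]]; exists w', w; split=> // y.
  by rewrite -h -{1}(act_invK a y) act_invK.
- move=> a b _ [wa [wa' [ha1 ha2]]] _ [wb [wb' [hb1 hb2]]].
  exists (wa ++ wb), (wb' ++ wa'); case: ha => _ hm; split=> y.
    by rewrite hm /gaw foldr_cat -/(gaw wb y) -hb1 -/(gaw wa _) -ha1.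
  rewrite /gaw foldr_cat -/(gaw wa' y) -ha2 -/(gaw wb' _) -hb2.
  set z := act (inv b) (act (inv a) y).
  have hz : act (mul a b) z = y by rewrite hm /z act_Kinv act_Kinv.
  by rewrite -{1}hz act_invK.
Qed.
End Words.

Section ANcov.
Variables (R : realType) (Y : topologicalType) (d : Y -> Y -> R).
Hypotheses (hm : is_metric d) (ht : induces_topology d) (cpt : compact [set: Y]).

Lemma ball_open_gen x r : open (dball d x r).
Proof.
case: (ht (dball d x r)) => _; apply=> y; rewrite /dball /= => hy.
exists (r - d x y); first by rewrite subr_gt0.
move=> z; rewrite /dball /= => hz.
case: hm => _ _ _ htr; have := htr x y z; lra.
Qed.

Lemma lebesgue k (U : 'I_k -> set Y) : (forall i, open (U i)) -> covers U ->
  exists2 l : R, 0 < l & forall y, exists i, dball d y l `<=` U i.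
Proof.
move=> Uo Ucov.
have : forall x, exists r : R, 0 < r /\ exists i, dball d x r `<=` U i.
  move=> x; have [i Ui] := Ucov x.
  have [r r0 hr] := (proj1 (ht (U i)) (Uo i)) x Ui.
  by exists r; split=> //; exists i.
move=> /choice [r hr].
have cov : forall y, exists x, dball d x (r x / 2) y.
  move=> y; exists y; rewrite /dball /=; case: hm => _ hs _ _.
  by rewrite (proj2 (hs y y)) // divr_gt0 //; case: (hr y).
have [p [h hh]] := @fin_subcover _ _ (fun x => dball d x (r x / 2)) cpt
  (fun x => @ball_open_gen x (r x / 2)) cov.
exists (\big[Num.min/1]_(a < p) (r (h a) / 2)).
    apply/bigmin_gtP; split=> // a _; rewrite divr_gt0 //; by case: (hr (h a)).
  move=> y; have [a ha] := hh y; have [_ [i hi]] := hr (h a).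
  exists i => z; rewrite /dball /= => hz; apply: hi; rewrite /dball /=.
  have hle := @bigmin_le _ _ _ 1 a (fun a => r (h a) / 2).
  move: ha; rewrite /dball /= => ha.
  case: hm => _ _ _ htr; have := htr (h a) y z.
  lra.
Qed.


Lemma comp_sym r (U : set Y) x y :
  r_component d r U x y -> r_component d r U y x.
Proof. by move=> [Ux [Uy h]]; split=> //; split=> //; exact: rst_sym. Qed.

Lemma comp_trans r (U : set Y) x y z :
  r_component d r U x y -> r_component d r U y z -> r_component d r U x z.
Proof.
move=> [Ux [Uy h1]] [_ [Uz h2]]; split=> //; split=> //; exact: rst_trans h1 h2.
Qed.

Lemma AN_covdim n : ANdim_le d n -> covdim_le Y n.
Proof.
move=> [C hC] k U Uo Ucov.
have [l l0 hl] := lebesgue Uo Ucov.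
set r := l / (2 * (`|C| + 1)).
have r0 : 0 < r by rewrite /r divr_gt0 // mulr_gt0 // ltr_wpDl.
have [U' [U'cov hU']] := hC r r0.
pose comp t x := r_component d r (U' t) x.
pose N (p : ('I_n.+1 * Y)%type) := [set y | exists z, comp p.1 p.2 z /\ d y z < r / 2].
case: hm => hpos hsep hsym htr.
have Nopen : forall p, open (N p).
  move=> p; case: (ht (N p)) => _; apply=> y [z [hz hyz]].
  exists (r / 2 - d y z); first by rewrite subr_gt0.
  move=> w; rewrite /dball /= => hw; exists z; split=> //.
  have := htr w y z; rewrite (hsym w y); lra.
have Ncov : forall y, exists p, N p y.
  move=> y; have [t ht'] := U'cov y; exists (t, y), y; split.
    by split=> //; split=> //; exact: rst_refl.
  by rewrite (proj2 (hsep y y)) // divr_gt0.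
have [q [h hh]] := @fin_subcover _ _ N cpt Nopen Ncov.
pose cond (a : 'I_q) := exists b : 'I_q,
  [/\ (b < a)%N, (h b).1 = (h a).1 & comp (h a).1 (h a).2 (h b).2].
pose V (a : 'I_q) := if pselect (cond a) then set0 else N (h a).
have Neq : forall a b, (h b).1 = (h a).1 -> comp (h a).1 (h a).2 (h b).2 ->
    N (h b) = N (h a).
  move=> a b e1 e2; apply/seteqP; split=> y [z [hz hyz]]; exists z; split=> //.
    by move: hz; rewrite e1 => hz; exact: comp_trans e2 hz.
  by rewrite e1; exact: comp_trans (comp_sym e2) hz.
exists q, V; split.
- by move=> a; rewrite /V; case: (pselect (cond a)) => ?; [exact: open0|exact: Nopen].
- move=> y; have [a0 ha0] := hh y.
  suff : forall j (a : 'I_q), nat_of_ord a = j -> N (h a) y -> exists a', V a' y.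
    by move=> H; exact: H _ a0 erefl ha0.
  elim/ltn_ind=> j ih a ea hNa.
  case E: (pselect (cond a)) => [[b [hb e1 e2]]|nc].
    by apply: (ih b) => //; [rewrite -ea | rewrite (Neq a b)].
  by exists a; rewrite /V E.
- move=> a; have [i hi] := hl (h a).2; exists i => y.
  rewrite /V; case: pselect => _ // [z [hz hyz]]; apply: hi; rewrite /dball /=.
  have hx : comp (h a).1 (h a).2 (h a).2.
    by case: hz => Ux _; split=> //; split=> //; exact: rst_refl.
  have hxz := hU' _ _ _ _ hx hz.
  have hC' : C * r <= `|C| * r by rewrite ler_wpM2r ?ler_norm // ltW.
  have hlr : `|C| * r + r / 2 < l.
    have hc0 : 2 * (`|C| + 1) != 0 by rewrite mulf_neq0 // gt_eqF // ltr_wpDl.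
    have el : l = r * (2 * (`|C| + 1)) by rewrite /r divfK.
    have hCr : 0 <= `|C| * r by rewrite mulr_ge0 // ltW.
    rewrite el; nra.
  have := htr (h a).2 z y; rewrite (hsym z y); lra.
- move=> y.
  set A := [set a | `[< V a y >]].
  have inj : {in A &, injective (fun a => (h a).1)}.
    have key : forall a b : 'I_q, (b < a)%N -> V a y -> V b y -> (h b).1 = (h a).1 -> False.
      move=> a b hba; rewrite /V; case: pselect => // nc.
      case: pselect => // _ [za [hza hya]] [zb [hzb hyb]] e1.
      apply: nc; exists b; split=> //.
      have hc : comp (h a).1 za zb.
        case: hza => _ [Uza _]; move: hzb; rewrite e1 => -[_ [Uzb _]].
        split=> //; split=> //; apply: rst_step; split=> //.
        have := htr za y zb; rewrite (hsym za y); lra.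
      have := comp_trans hza hc; rewrite -e1 => hx.
      exact: comp_trans hx (comp_sym hzb).
    move=> a b; rewrite /A !in_setE => /asboolP ha /asboolP hb e1.
    case: (ltngtP a b) => hab; last exact: val_inj.
    - by exfalso; exact: key b a hab hb ha e1.
    - by exfalso; exact: key a b hab ha hb (esym e1).
  rewrite -(card_in_imset inj).
  by apply: leq_trans (max_card _) _; rewrite card_ord.
Qed.

End ANcov.

Lemma pm_lip (R : realType) (Y : Type) (rho : Y -> Y -> R) : pm rho ->
  forall x y z, `|rho x z - rho y z| <= rho x y.
Proof.
case=> h0 hxx hs ht x y z; rewrite ler_norml; apply/andP; split.
- have := ht y x z; rewrite (hs y x); lra.
- have := ht x y z; lra.
Qed.

Section Good.
Variables (R : realType) (Y : topologicalType) (d0 : Y -> Y -> R).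
Hypotheses (hm0 : is_metric d0) (ht0 : induces_topology d0) (cpt : compact [set: Y]).
Variables (L : finType) (f : L -> Y -> Y).
Hypothesis fcont : forall a, continuous (f a).
Variable n : nat.

Definition Lip (rho : Y -> Y -> R) :=
  exists c, 0 < c /\ forall x y z, `|rho x z - rho y z| <= c * d0 x y.

Definition Good (prev : nat -> Y -> Y -> R) (j : nat) (rho : Y -> Y -> R) :=
  [/\ pm rho, (forall x y, rho x y <= e R j), Lip rho &
    exists W : 'I_n.+1 -> set Y, covers W /\
      forall t x y, clos_refl_sym_trans Y
         (fun a b => [/\ W t a, W t b & rho a b < e R j / n.+2%:R]) x y ->
      forall i w, (i < j)%N -> (size w < j)%N ->
        prev i (aw f w x) (aw f w y) <= e R j].

Hypothesis hdim : covdim_le Y n.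
Variable prev : nat -> Y -> Y -> R.
Hypotheses (hprev : forall i, pm (prev i)) (hplip : forall i, Lip (prev i)).
Variable j : nat.

Lemma good_exists : exists rho, Good prev j rho.
Proof.
case: hm0 => d0pos d0sep d0sym d0tri.
have d0xx : forall x, d0 x x = 0 by move=> x; apply/d0sep.
pose del := e R j / 2.
have del0 : 0 < del by rewrite divr_gt0 // e_gt0.
pose O x := [set z | forall i w, (i < j)%N -> (size w < j)%N ->
    prev i (aw f w x) (aw f w z) < del].
have Oo : forall x, open (O x) := fun x => open_near hm0 ht0 fcont hprev hplip x j del.
have Ocov : forall y, exists x, O x y.
  by move=> y; exists y => i w _ _; case: (hprev i) => _ -> _ _.
have [p [h hh]] := @fin_subcover _ _ O cpt Oo Ocov.
have [m [V [Vo Vcov Vref Vord]]] := hdim (fun a => Oo (h a)) hh.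
have osc : forall s y z, V s y -> V s z -> forall i w, (i < j)%N -> (size w < j)%N ->
    prev i (aw f w y) (aw f w z) <= e R j.
  move=> s y z Vy Vz i w hi hw; have [a ha] := Vref s.
  have := ha _ Vy i w hi hw; have := ha _ Vz i w hi hw.
  case: (hprev i) => _ _ hs ht.
  have := ht (aw f w y) (aw f w (h a)) (aw f w z).
  rewrite (hs (aw f w y) (aw f w (h a))) /del => h1 h2 h3.
  have : e R j / 2 + e R j / 2 = e R j by field.
  lra.
pose E s x := [set v : R | v = 1 \/ exists z, ~ V s z /\ v = Num.min (d0 x z) 1].
pose g s x := inf (E s x).
have Ene : forall s x, E s x !=set0 by move=> s x; exists 1; left.
have Elb : forall s x, has_lbound (E s x).
  move=> s x; exists 0 => v [->|[z [_ ->]]]; first exact: ler01.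
  by rewrite le_min d0pos ler01.
have g_ge0 : forall s x, 0 <= g s x.
  move=> s x; apply: lb_le_inf => // v [->|[z [_ ->]]]; first exact: ler01.
  by rewrite le_min d0pos ler01.
have g_le : forall s x v, E s x v -> g s x <= v.
  by move=> s x v Ev; apply: ge_inf.
have g_le1 : forall s x, g s x <= 1 by move=> s x; apply: g_le; left.
have g_lip : forall s x y, g s x <= g s y + d0 x y.
  move=> s x y; rewrite -lerBlDr; apply: lb_le_inf => // v [->|[z [nz ->]]].
    by rewrite lerBlDr; apply: le_trans (g_le1 s x) _; rewrite lerDl.
  rewrite lerBlDr; apply: le_trans (g_le s x _ (or_intror (ex_intro _ z (conj nz erefl)))) _.
  have := d0tri x y z; have := d0pos x y.
  case: (leP (d0 x z) 1); case: (leP (d0 y z) 1); lra.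
have g_pos : forall s x, V s x -> 0 < g s x.
  move=> s x Vx; have [r r0 hr] := proj1 (ht0 (V s)) (Vo s) x Vx.
  apply: lt_le_trans (_ : 0 < Num.min r 1) _; first by rewrite lt_min r0 ltr01.
  apply: lb_le_inf => // v [->|[z [nz ->]]]; first by rewrite ge_min lexx orbT.
  have : ~ d0 x z < r by move=> hz; apply: nz; apply: hr.
  move/negP; rewrite -leNgt => hrz.
  by rewrite le_min !ge_min hrz lexx /= orbT.
have g_zero : forall s x, ~ V s x -> g s x = 0.
  move=> s x nV; apply/eqP; rewrite eq_le g_ge0 andbT.
  by apply: (g_le s x); right; exists x; split=> //; rewrite d0xx; apply/esym/min_idPl.
have : forall x, exists s, V s x /\ 0 < g s x.
  by move=> x; have [s Vs] := Vcov x; exists s; split=> //; exact: g_pos.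
move=> /choice [sx hsx].
pose Q x := [set y | g (sx x) x / 2 < g (sx x) y].
have Qo : forall x, open (Q x).
  move=> x; case: (ht0 (Q x)) => _; apply=> y; rewrite /Q /= => hy.
  exists (g (sx x) y - g (sx x) x / 2); first by rewrite subr_gt0.
  move=> z; rewrite /dball /= => hz; have := g_lip (sx x) y z; lra.
have Qcov : forall y, exists x, Q x y.
  move=> y; exists y; rewrite /Q /=; have [_ h1] := hsx y; lra.
have [p' [h' hh']] := @fin_subcover _ _ Q cpt Qo Qcov.
pose mu := \big[Num.min/1]_(a < p') (g (sx (h' a)) (h' a) / 2).
have mu0 : 0 < mu.
  apply/bigmin_gtP; split=> // a _; rewrite divr_gt0 //; by case: (hsx (h' a)).
have mu_le : forall x, exists s, mu <= g s x.
  move=> x; have [a ha] := hh' x; exists (sx (h' a)).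
  have hle := @bigmin_le _ _ _ 1 a (fun a => g (sx (h' a)) (h' a) / 2).
  move: ha; rewrite /Q /= => ha; apply: le_trans hle (ltW ha).
pose phi s x := Num.min 1 (g s x / mu).
have phi_ge0 : forall s x, 0 <= phi s x.
  by move=> s x; rewrite le_min ler01 divr_ge0 // ltW.
have phi_le1 : forall s x, phi s x <= 1 by move=> s x; rewrite ge_min lexx.
have phi_V : forall s x, 0 < phi s x -> V s x.
  move=> s x; apply: contraPP => nV; rewrite /phi g_zero // mul0r.
  by rewrite (min_idPr ler01) ltxx.
have phi_one : forall x, exists s, phi s x = 1.
  move=> x; have [s hs] := mu_le x; exists s; apply/min_idPl.
  by rewrite ler_pdivlMr // mul1r.
have phi_lip : forall s x y, `|phi s x - phi s y| <= d0 x y / mu.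
  move=> s x y; have dm : 0 <= d0 x y / mu by rewrite divr_ge0 // ltW.
  rewrite ler_norml; apply/andP; split.
    have := g_lip s y x; rewrite d0sym => hg.
    have : g s y / mu <= g s x / mu + d0 x y / mu by rewrite -mulrDl ler_pM2r ?invr_gt0.
    rewrite /phi; case: (leP 1 (g s x / mu)); case: (leP 1 (g s y / mu)); lra.
  have := g_lip s x y => hg.
  have : g s x / mu <= g s y / mu + d0 x y / mu by rewrite -mulrDl ler_pM2r ?invr_gt0.
  rewrite /phi; case: (leP 1 (g s x / mu)); case: (leP 1 (g s y / mu)); lra.
pose M x y := \big[Num.max/0]_(s < m) `|phi s x - phi s y|.
have M_ge : forall s x y, `|phi s x - phi s y| <= M x y.
  by move=> s x y; exact: le_bigmax.
have M_le : forall x y b, 0 <= b -> (forall s, `|phi s x - phi s y| <= b) -> M x y <= b.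
  by move=> x y b b0 H; apply: bigmax_le.
have M_ge0 : forall x y, 0 <= M x y.
  by move=> x y; rewrite /M bigmax_idl le_max lexx.
have ej0 := e_gt0 R j.
pose rho x y := e R j * M x y.
have rho_pm : pm rho.
  split.
  - by move=> x y; rewrite mulr_ge0 // ltW.
  - move=> x; apply/eqP; rewrite mulf_eq0; apply/orP; right.
    rewrite eq_le M_ge0 andbT M_le // => s; by rewrite subrr normr0.
  - move=> x y; congr (_ * _); apply: eq_bigr => s _; exact: distrC.
  - move=> x y z; rewrite -mulrDr; apply: (ler_wpM2l (ltW ej0)).
    apply: M_le; first by rewrite addr_ge0.
    move=> s; apply: le_trans (ler_distD (phi s y) _ _) _.
    exact: lerD.
exists rho; split=> //.
- move=> x y; rewrite -[X in _ <= X]mulr1; apply: (ler_wpM2l (ltW ej0)).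
  apply: M_le => // s; rewrite ler_norml; have := phi_ge0 s x; have := phi_ge0 s y.
  have := phi_le1 s x; have := phi_le1 s y; move=> *; apply/andP; split; lra.
- exists (e R j / mu); split; first by rewrite divr_gt0.
  move=> x y z; apply: le_trans (pm_lip rho_pm x y z) _.
  rewrite /rho -mulrA; apply: (ler_wpM2l (ltW ej0)).
  rewrite mulrC; apply: M_le; [by rewrite divr_ge0 ?d0pos // ltW | move=> s; exact: phi_lip].
pose k := n.+2%:R : R.
have k0 : 0 < k by rewrite ltr0n.
pose W (t : 'I_n.+1) := [set x | forall s, ~ (t%:R / k < phi s x /\ phi s x <= t.+1%:R / k)].
have lt1 : forall t : 'I_n.+1, t.+1%:R / k < 1.
  move=> t; rewrite ltr_pdivrMr // mul1r ltr_nat /k.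
  by apply: leq_ltn_trans (ltn_ord t) _.
exists W; split.
- move=> x; apply: contrapT => nW.
  have H : forall t : 'I_n.+1, exists s, t%:R / k < phi s x /\ phi s x <= t.+1%:R / k.
    move=> t; apply: contrapT => nt; apply: nW; exists t => s hs; apply: nt.
    by exists s.
  have [F hF] := choice H.
  have Finj : injective F.
    move=> t t' et; have := hF t; have := hF t'; rewrite et => -[a1 a2] [b1 b2].
    have c1 : t%:R / k < t'.+1%:R / k by apply: lt_le_trans b1 a2.
    have c2 : t'%:R / k < t.+1%:R / k by apply: lt_le_trans a1 b2.
    move: c1 c2; rewrite !ltr_pM2r ?invr_gt0 // !ltr_nat !ltnS => c1 c2.
    by apply: val_inj; apply/eqP; rewrite eqn_leq c1 c2.
  have [s0 hs0] := phi_one x.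
  have ns0 : s0 \notin (F @: 'I_n.+1).
    apply/imsetP => -[t _ et]; have := hF t; rewrite -et hs0 => -[_ h1].
    by have := lt1 t; rewrite ltNge h1.
  pose Bf := [set s | `[< V s x >]]%SET.
  have sub : (s0 |: (F @: 'I_n.+1))%SET \subset Bf.
    apply/fintype.subsetP => s; rewrite in_setU1 => /orP[/eqP->|/imsetP[t _ ->]];
      rewrite inE; apply/asboolP; apply: phi_V.
      by rewrite hs0 ltr01.
    have := hF t => -[h1 _]; apply: le_lt_trans h1; by rewrite divr_ge0 // ltW.
  have := subset_leq_card sub; rewrite cardsU1 ns0 card_imset // card_ord.
  have eB : #|Bf| = #|[set s | `[< V s x >]]|.
    apply: eq_card => s; rewrite !inE; apply/idP/idP => hh0; [by apply: mem_set | by move/set_mem: hh0].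
  move=> hc; have := Vord x; rewrite -eB leqNgt; move/negP; apply.
  exact: leq_trans hc.
- move=> t x y hc i w hi hw.
  set th := t.+1%:R / k.
  have th1 : th = t%:R / k + 1 / k by rewrite /th -mulrDl natr1.
  have th0 : 0 < th by rewrite /th divr_gt0 // ltr0n.
  have step : forall a b, W t a -> W t b -> rho a b < e R j / k ->
      forall s, th < phi s a -> th < phi s b.
    move=> a b Wa Wb hab s ha.
    have hM : M a b < 1 / k.
      by rewrite -(ltr_pM2l ej0) mul1r.
    have hd := le_lt_trans (M_ge s a b) hM.
    have hb : t%:R / k < phi s b.
      move: hd; rewrite ltr_norml => /andP[_ h2]; move: ha h2; rewrite th1; generalize (t%:R / k) (1 / k) (phi s a) (phi s b) => u v pa pb; lra.
    have := Wb s; rewrite -/th => nb; rewrite ltNge; apply/negP => hb2; apply: nb.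
    by split.
  have inv : forall a b, clos_refl_sym_trans Y
      (fun a b => [/\ W t a, W t b & rho a b < e R j / n.+2%:R]) a b ->
      forall s, th < phi s a <-> th < phi s b.
    move=> a b; elim=> {a b}.
    - move=> a b [Wa Wb hab] s; split; first exact: step.
      by apply: step => //; case: rho_pm => _ _ <- _.
    - by move=> a s.
    - by move=> a b _ ih s; apply: iff_sym.
    - by move=> a b c _ ih1 _ ih2 s; apply: iff_trans (ih1 s) (ih2 s).
  have [s0 hs0] := phi_one x.
  have h1 : th < phi s0 x by rewrite hs0; exact: lt1.
  have h2 := (proj1 (inv x y hc s0)) h1.
  apply: (osc s0); [apply: phi_V; lra | apply: phi_V; lra | exact: hi | exact: hw].
Qed.

End Good.

Lemma crst_mono (T : Type) (R1 R2 : T -> T -> Prop) :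
  (forall a b, R1 a b -> R2 a b) ->
  forall x y, clos_refl_sym_trans T R1 x y -> clos_refl_sym_trans T R2 x y.
Proof.
move=> H x y; elim=> {x y}.
- by move=> a b /H; exact: rst_step.
- by move=> a; exact: rst_refl.
- by move=> a b _ ih; exact: rst_sym.
- by move=> a b c _ ih1 _ ih2; exact: rst_trans ih1 ih2.
Qed.

Lemma AN_mono (R : realType) (Y : Type) (d : Y -> Y -> R) n0 n :
  ANdim_le d n0 -> (n0 <= n)%N -> ANdim_le d n.
Proof.
move=> [C hC] hn; exists C => r r0; have [U0 [U0cov hU0]] := hC r r0.
exists (fun t : 'I_n.+1 => if (t < n0.+1)%N then U0 (inord t) else set0); split.
  move=> y; have [t ht] := U0cov y.
  exists (widen_ord (hn : (n0.+1 <= n.+1)%N) t).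
  by rewrite /= ltn_ord inord_val.
move=> t x y z; case: ifP => _; first exact: hU0.
by move=> [].
Qed.

Section Construction.
Variables (R : realType) (Y : topologicalType) (d0 : Y -> Y -> R).
Hypotheses (hm0 : is_metric d0) (ht0 : induces_topology d0) (cpt : compact [set: Y]).
Variables (L : finType) (f : L -> Y -> Y).
Hypothesis fcont : forall a, continuous (f a).
Variable n : nat.

Definition rho0 (x y : Y) : R := Num.min (d0 x y) 1.

Lemma pick_ex (prev : nat -> Y -> Y -> R) (j : nat) : exists rho : Y -> Y -> R,
  Good d0 f n prev j rho \/ (~ (exists r, Good d0 f n prev j r) /\ rho = fun _ _ => 0).
Proof.
case: (pselect (exists r, Good d0 f n prev j r)) => [[r hr]|nr].
  by exists r; left.
by exists (fun _ _ => 0); right.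
Qed.

Definition pick prev j := proj1_sig (constructive_indefinite_description (pick_ex prev j)).

Lemma pickP prev j : Good d0 f n prev j (pick prev j) \/
  (~ (exists r, Good d0 f n prev j r) /\ pick prev j = fun _ _ => 0).
Proof. exact: proj2_sig (constructive_indefinite_description (pick_ex prev j)). Qed.

Fixpoint F (j : nat) : nat -> Y -> Y -> R :=
  match j with
  | 0 => fun _ => rho0
  | j'.+1 => fun i => if (i <= j')%N then F j' i else pick (F j') j'.+1
  end.

Definition rhoS i := F i i.

Lemma F_stable j i : (i <= j)%N -> F j i = rhoS i.
Proof.
elim: j => [|j ih]; first by rewrite leqn0 => /eqP ->.
rewrite leq_eqVlt => /orP[/eqP ->|hi] //=.
by rewrite -ltnS hi ih.
Qed.

Lemma rho0_pm : pm rho0.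
Proof.
case: hm0 => hpos hsep hsym htr; rewrite /rho0; split.
- by move=> x y; rewrite le_min hpos ler01.
- by move=> x; rewrite (proj2 (hsep x x)) //; apply/min_idPl; exact: ler01.
- by move=> x y; rewrite hsym.
- move=> x y z; have := htr x y z; have := hpos x y; have := hpos y z.
  case: (leP (d0 x z) 1); case: (leP (d0 x y) 1); case: (leP (d0 y z) 1); lra.
Qed.

Lemma rho0_lip : Lip d0 rho0.
Proof.
exists 1; split=> // x y z; rewrite mul1r.
apply: le_trans (pm_lip rho0_pm x y z) _.
by rewrite /rho0 ge_min lexx.
Qed.

Lemma zero_pm : pm (fun _ _ : Y => (0 : R)).
Proof. by split=> // *; rewrite addr0. Qed.

Lemma zero_lip : Lip d0 (fun _ _ : Y => (0 : R)).
Proof.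
case: hm0 => hpos _ _ _.
by exists 1; split=> // x y z; rewrite subrr normr0 mul1r.
Qed.

Lemma F_inv j i : pm (F j i) /\ Lip d0 (F j i).
Proof.
elim: j i => [|j ih] i /=; first by split; [exact: rho0_pm|exact: rho0_lip].
case: ifP => _; first exact: ih.
case: (pickP (F j) j.+1) => [[hp _ hl _]|[_ ->]]; first by split.
by split; [exact: zero_pm|exact: zero_lip].
Qed.

Lemma rhoS_pm i : pm (rhoS i). Proof. exact: (F_inv i i).1. Qed.
Lemma rhoS_lip i : Lip d0 (rhoS i). Proof. exact: (F_inv i i).2. Qed.

Lemma rhoS_b i x y : rhoS i x y <= e R i.
Proof.
case: i => [|j]; first by rewrite /rhoS /= /rho0 /e expr0 ge_min lexx orbT.
rewrite /rhoS /= ltnn.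
case: (pickP (F j) j.+1) => [[_ hb _ _]|[_ ->]]; first exact: hb.
exact: ltW (e_gt0 _ _).
Qed.

Lemma rhoS_0 x y : Num.min (d0 x y) 1 <= rhoS 0 x y.
Proof. by []. Qed.

Definition Dm := D f rhoS.

Lemma Dm_metric : is_metric Dm.
Proof. have := @D_metric R Y d0 hm0 L f rhoS rhoS_pm rhoS_b. apply. exact: rhoS_0. Qed.

Lemma Dm_top : induces_topology Dm.
Proof. have := @D_topology R Y d0 hm0 ht0 L f fcont rhoS rhoS_pm rhoS_b rhoS_lip. apply. exact: rhoS_0. Qed.

Lemma Dm_lip w x y : Dm (aw f w x) (aw f w y) <= 2 ^+ size w * Dm x y.
Proof. exact: (@D_lipw R Y L f rhoS rhoS_pm rhoS_b). Qed.

Lemma Dm_AN : covdim_le Y n -> ANdim_le Dm n.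
Proof.
move=> hdim.
have good : forall j, Good d0 f n (F j) j.+1 (rhoS j.+1).
  move=> j; rewrite /rhoS /= ltnn.
  case: (pickP (F j) j.+1) => [//|[nr _]]; exfalso; apply: nr.
  apply: (good_exists hm0 ht0 cpt fcont hdim) => i; [exact: (F_inv j i).1|exact: (F_inv j i).2].
pose k : R := n.+2%:R.
have k0 : 0 < k by rewrite ltr0n.
exists (2 * k) => r r0.
have ex : exists K, `[< e R K / k < 2 * r >].
  have h2 : 0 < 2 * r * k by rewrite !mulr_gt0.
  have [K hK] := e_small h2.
  by exists K; apply/asboolP; rewrite ltr_pdivrMr.
case: (ex_minnP ex) => j /asboolP hj hmin.
case: j hj hmin => [|j] hj hmin.
- exists (fun _ => setT); split; first by move=> y; exists ord0.
  move=> t x y z _ _; apply: le_trans (D_le1 f rhoS_pm rhoS_b y z) _.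
  move: hj; rewrite /e expr0 ltr_pdivrMr // => h; apply: ltW.
  by rewrite mulrC mulrA [r * 2]mulrC.
- have [_ _ _ [W [Wcov HW]]] := good j.
  have hr : r <= e R j.+1 / k.
    have hn : ~ (e R j / k < 2 * r).
      by move=> h; have := hmin j (asboolT h); rewrite ltnn.
    rewrite leNgt; apply/negP => hlt; apply: hn.
    rewrite (_ : e R j = 2 * e R j.+1); last by rewrite eS mulrC divfK ?pnatr_eq0.
    by rewrite -mulrA ltr_pM2l.
  exists W; split=> // t x y z hy hz.
  have chain : clos_refl_sym_trans Y
      (fun a b => [/\ W t a, W t b & rhoS j.+1 a b < e R j.+1 / n.+2%:R]) y z.
    have hR : forall a b, r_close Dm r (W t) a b ->
        [/\ W t a, W t b & rhoS j.+1 a b < e R j.+1 / n.+2%:R].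
      move=> a b [Wa Wb hab]; split=> //.
      apply: le_lt_trans _ (lt_le_trans hab hr).
      have := D_ge_term f rhoS_pm rhoS_b a b j.+1 [::].
      by rewrite /term /= /e expr0 mul1r.
    case: hy => _ [_ hy]; case: hz => _ [_ hz].
    exact: rst_trans (rst_sym _ _ _ _ (crst_mono hR hy)) (crst_mono hR hz).
  have := HW t y z chain.
  move=> H; apply: le_trans (@D_tail _ _ _ f rhoS rhoS_pm rhoS_b y z j.+1 (e R j.+1) (ltW (e_gt0 R j.+1)) _) _.
    by move=> i w hi hw; rewrite -(@F_stable j i) ?H // -ltnS.
  rewrite maxxx; apply: ltW.
  have -> : 2 * k * r = 2 * r * k by rewrite -!mulrA [k * r]mulrC.
  by move: hj; rewrite ltr_pdivrMr.
Qed.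

End Construction.

Theorem lemma8p6 (R : realType) (G : Type) (mul : G -> G -> G) (one : G)
    (inv : G -> G) (Y : topologicalType) (act : G -> Y -> Y) :
  is_group mul one inv -> finitely_generated mul one inv ->
  is_action mul one act -> (forall g, continuous (act g)) ->
  compact [set: Y] -> metrisable R Y ->
  exists d : Y -> Y -> R,
    [/\ is_metric d, induces_topology d,
        forall g, lipschitz d (act g) &
        forall n : nat, covdim_le Y n <-> ANdim_le d n].
Proof.
move=> hg [S [Sfin Sgen]] ha hcont cpt [d0 [hm0 ht0]].
have [s Ss] : exists s : seq {classic G}, S = [set` s].
  exact: (proj1 (@finite_seqP {classic G} S) Sfin).
pose k := size s.
pose gen (i : 'I_k) : G := nth one s i.
pose f := fun a : ('I_k + 'I_k)%type => act (glet inv gen a).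
have fcont : forall a, continuous (f a) by move=> a; exact: hcont.
have hS : forall s0, S s0 -> exists i, gen i = s0.
  move=> s0; rewrite Ss /= => hs0.
  have hi : (index (s0 : {classic G}) s < k)%N by rewrite index_mem.
  by exists (Ordinal hi); exact: (@nth_index {classic G} one (s0 : {classic G}) s hs0).
have [n0 hn0] : exists n0, (exists n, covdim_le Y n) ->
    covdim_le Y n0 /\ forall n, covdim_le Y n -> (n0 <= n)%N.
  case: (pselect (exists n, covdim_le Y n)) => [ex|nex]; last by exists 0%N.
  have ex' : exists n, `[< covdim_le Y n >].
    by case: ex => n hn; exists n; apply/asboolP.
  case: (ex_minnP ex') => m /asboolP hm hmin; exists m => _; split=> // n hn.
  by apply: hmin; exact/asboolP.
exists (Dm d0 f n0); split.
- exact: Dm_metric.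
- exact: Dm_top.
- move=> g; have [w [w' [hw _]]] := words_gen hg ha hS (Sgen g).
  exists (2 ^+ size w) => x y; rewrite !hw.
  exact: (Dm_lip hm0 f n0 w x y).
- move=> n; split.
  + move=> hc; have [h1 h2] := hn0 (ex_intro _ n hc).
    exact: AN_mono (Dm_AN hm0 ht0 cpt fcont h1) (h2 n hc).
  + move=> han; have := AN_covdim (Dm_metric hm0 f n0) (Dm_top hm0 ht0 fcont n0) cpt; apply; exact: han.
Qed.
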